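(* Let $f_1,\dots,f_n,g\in\mathbb K[x,\bar y_0,\bar y]$ and $\bar r_0=(r_{01},\dots,r_{0n})\in\mathbb K^n$ with $g(0,\bar r_0,\bar r_0)\neq 0$. Let $w$ be a new variable and let $h(x,\bar y_0,\bar y,w)$ be the polynomial obtained from the syntactic stream derivative $g'=g'(x,\bar y_0,\bar y,\bar y')$ by replacing each variable $y_i'$ with the polynomial $f_i(x,\bar y_0,\bar y)\cdot w$, $i=1,\dots,n$. Let $\bar\sigma=(\sigma_1,\dots,\sigma_n)\in\Sigma^n$ satisfy $$\sigma_i'=f_i(X,\bar r_0,\bar\sigma)\times g(X,\bar r_0,\bar\sigma)^{-1},\qquad \sigma_i(0)=r_{0i}\qquad(i=1,\dots,n).$$ Then, with $\tau:=g(X,\bar r_0,\bar\sigma)^{-1}$, the tuple $(\bar\sigma,\tau)$ is the unique solution of the polynomial initial value problem $$\sigma_i'=f_i(X,\bar r_0,\bar\sigma)\times\tau,\ \ \sigma_i(0)=r_{0i}\ (i=1,\dots,n);\qquad \tau'=-g(0,\bar r_0,\bar r_0)^{-1}\, h(X,\bar r_0,\bar\sigma,\tau)\times\tau,\ \ \tau(0)=g(0,\bar r_0,\bar r_0)^{-1}.$$ Conversely, for any $(\bar\sigma,\tau)\in\Sigma^{n+1}$ satisfying this polynomial initial value problem, $\bar\sigma$ satisfies the rational system displayed above.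
   Context: Streams $\Sigma=\mathbb K^\omega$ over a field $\mathbb K$ of characteristic $0$, with pointwise sum, convolution $(\sigma\times\tau)(i)=\sum_{j=0}^{i}\sigma(j)\tau(i-j)$, scalars $r$ identified with $(r,0,0,\dots)$, $X=(0,1,0,\dots)$, stream derivative $\sigma'(i)=\sigma(i+1)$. A stream $\sigma$ with $\sigma(0)\ne0$ has a unique convolution inverse $\sigma^{-1}$. Evaluation $q(X,\bar r_0,\bar\sigma,\dots)$ of a polynomial substitutes $x\mapsto X$, $y_{0i}\mapsto r_{0i}$ (constant stream), $y_i\mapsto\sigma_i$, $w\mapsto\tau$. The syntactic stream derivative: with $y_0:=x$, $y_{00}:=0$, total order $y_0<y_1<\dots<y_n$, and $\min(m)$ the least variable of a monomial $m\neq1$, define on monomials by induction on total degree $(1)'=0$, $(x)'=1$, $(y_i)'=y_i'$ ($1\le i\le n$), $(y_i m)'=y_i' m+y_{0i}(m)'$ when $m\ne1$ and $y_i=\min(y_im)$, and extend linearly; for $g\in\mathbb K[x,\bar y_0,\bar y]$ the $y_{0i}$ appearing in $g$ are treated as coefficients (constants), so $g'\in\mathbb K[x,\bar y_0,\bar y,\bar y']$. A solution of a polynomial stream differential equation system $y_i'=p_i$, $y_i(0)=r_i$ is a tuple of streams with $\sigma_i'=p_i(X,\bar\sigma)$ and $\sigma_i(0)=r_i$. *)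

(* Defs.v *)
From HB Require Import structures.
From mathcomp Require Import all_boot all_order all_algebra.
From mathcomp Require Import mpoly.
Set Implicit Arguments. Unset Strict Implicit. Unset Printing Implicit Defensive.
Import GRing.Theory.
Local Open Scope ring_scope.

Section Streams.
Variable K : fieldType.

Definition stream := nat -> K.

Definition sadd (s t : stream) : stream := fun i => s i + t i.
Definition smul (s t : stream) : stream :=
  fun i => \sum_(j < i.+1) s j * t (i - j)%N.
Definition sconst (r : K) : stream := fun i => if i is 0%N then r else 0.
Definition szero : stream := sconst 0.
Definition sone : stream := sconst 1.
(* scaling by a scalar = convolution with the constant stream *)
Definition sscale (r : K) (s : stream) : stream := fun i => r * s i.
Definition sX : stream := fun i => if i == 1%N then 1 else 0.
Definition sder (s : stream) : stream := fun i => s i.+1.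
Definition spow (s : stream) (k : nat) : stream := iter k (smul s) sone.

(* convolution inverse: tau(0) = s(0)^-1,
   tau(m+1) = - s(0)^-1 * sum_{j=1}^{m+1} s(j) tau(m+1-j);
   this is the unique convolution inverse when s(0) != 0. *)
Fixpoint sinv_aux (s : stream) (m : nat) : seq K :=
  match m with
  | 0%N => [:: (s 0%N)^-1]
  | m'.+1 => let t := sinv_aux s m' in
      rcons t (- (s 0%N)^-1 * \sum_(j < m'.+1) s j.+1 * nth 0 t (m' - j)%N)
  end.
Definition sinv (s : stream) : stream := fun i => nth 0 (sinv_aux s i) i.

Definition seval (k : nat) (p : {mpoly K[k]}) (v : 'I_k -> stream) : stream :=
  \big[sadd/szero]_(m <- msupp p)
     sscale (p@_m) (\big[smul/sone]_(j < k) spow (v j) (m j)).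

End Streams.

Section Vars.
Variable n : nat.
(* Ring A = K[x, y01..y0n, y1..yn] : variables indexed by 'I_(n+n).+1 *)
Definition vxA : 'I_(n+n).+1 := inord 0.
Definition vy0A (i : 'I_n) : 'I_(n+n).+1 := inord i.+1.
Definition vyA (i : 'I_n) : 'I_(n+n).+1 := inord (n + i).+1.
(* Ring B = K[x, y0, y, y'] : variables indexed by 'I_(n+n+n).+1 *)
Definition vxB : 'I_(n+n+n).+1 := inord 0.
Definition vy0B (i : 'I_n) : 'I_(n+n+n).+1 := inord i.+1.
Definition vyB (i : 'I_n) : 'I_(n+n+n).+1 := inord (n + i).+1.
Definition vypB (i : 'I_n) : 'I_(n+n+n).+1 := inord (n + n + i).+1.
(* Ring C = K[x, y0, y, w] : variables indexed by 'I_(n+n).+2 *)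
Definition vxC : 'I_(n+n).+2 := inord 0.
Definition vy0C (i : 'I_n) : 'I_(n+n).+2 := inord i.+1.
Definition vyC (i : 'I_n) : 'I_(n+n).+2 := inord (n + i).+1.
Definition vwC : 'I_(n+n).+2 := inord (n + n).+1.
End Vars.

(* apply F to the ordinal k : 'I_n (default d if k >= n, never used) *)
Definition atI (T : Type) (n k : nat) (F : 'I_n -> T) (d : T) : T :=
  if @insub nat (fun k => (k < n)%N) 'I_n k is Some i then F i else d.

Section SyntacticDerivative.
Variables (K : fieldType) (n : nat).
Local Notation A := {mpoly K[(n+n).+1]}.
Local Notation B := {mpoly K[(n+n+n).+1]}.
Local Notation C := {mpoly K[(n+n).+2]}.

(* the variables y_0 := x (None), y_1..y_n (Some i), in the total order
   y_0 < y_1 < ... < y_n *)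
Definition varB (z : option 'I_n) : B :=
  if z is Some i then 'X_(vyB i) else 'X_(vxB n).
Definition dvarB (z : option 'I_n) : B :=
  if z is Some i then 'X_(vypB i) else 1.
Definition cvarB (z : option 'I_n) : B :=
  if z is Some i then 'X_(vy0B i) else 0.

(* a monomial in x, y_1..y_n written as a word sorted by the variable order;
   the head of the word is min(m).  (z m)' = z' m + y_{0z} (m)', (1)' = 0 *)
Fixpoint dword (w : seq (option 'I_n)) : B :=
  match w with
  | [::] => 0
  | z :: w' => dvarB z * \prod_(u <- w') varB u + cvarB z * dword w'
  end.

Definition word_of (m : 'X_{1..(n+n).+1}) : seq (option 'I_n) :=
  nseq (m (vxA n)) None ++ flatten [seq nseq (m (vyA i)) (Some i) | i <- enum 'I_n].

(* the y_{0i}-part of a monomial, treated as a coefficient *)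
Definition y0part (m : 'X_{1..(n+n).+1}) : B :=
  \prod_(i < n) 'X_(vy0B i) ^+ m (vy0A i).

Definition synder (g : A) : B :=
  \sum_(m <- msupp g) g@_m *: (y0part m * dword (word_of m)).

Definition embAC (p : A) : C :=
  p \mPo [tuple 'X_(widen_ord (leqnSn _) j) | j < (n+n).+1].

(* h(x,y0,y,w) := g'[y_i' := f_i * w] *)
Definition hpoly (f : 'I_n -> A) (g : A) : C :=
  synder g \mPo [tuple
    (if (j < (n+n).+1)%N then 'X_(inord j)
     else atI (j - (n+n).+1) (fun i => embAC (f i)) 0 * 'X_(vwC n)) | j < (n+n+n).+1].
End SyntacticDerivative.

Section Systems.
Variables (K : fieldType) (n : nat).
Local Notation A := {mpoly K[(n+n).+1]}.

(* point (x, y0, y) := (X, r0, sigma) in streams *)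
Definition ptA (r0 : 'I_n -> K) (sigma : 'I_n -> stream K) :
    'I_(n+n).+1 -> stream K :=
  fun j => if (j == 0%N :> nat) then sX K
           else if (j <= n)%N then sconst (atI j.-1 r0 0)
           else atI (j - n).-1 sigma (szero K).
(* point (x, y0, y, w) := (X, r0, sigma, tau) *)
Definition ptC (r0 : 'I_n -> K) (sigma : 'I_n -> stream K) (tau : stream K) :
    'I_(n+n).+2 -> stream K :=
  fun j => if (j == 0%N :> nat) then sX K
           else if (j <= n)%N then sconst (atI j.-1 r0 0)
           else if (j <= n + n)%N then atI (j - n).-1 sigma (szero K)
           else tau.
(* point (x, y0, y) := (0, r0, r0) in K *)
Definition pt0 (r0 : 'I_n -> K) : 'I_(n+n).+1 -> K :=
  fun j => if (j == 0%N :> nat) then 0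
           else if (j <= n)%N then atI j.-1 r0 0
           else atI (j - n).-1 r0 0.

Definition rat_sol (f : 'I_n -> A) (g : A) (r0 : 'I_n -> K)
    (sigma : 'I_n -> stream K) : Prop :=
  forall i : 'I_n,
    sder (sigma i) =1 smul (seval (f i) (ptA r0 sigma))
                           (sinv (seval g (ptA r0 sigma)))
    /\ sigma i 0%N = r0 i.

Definition poly_sol (f : 'I_n -> A) (g : A) (r0 : 'I_n -> K)
    (sigma : 'I_n -> stream K) (tau : stream K) : Prop :=
  (forall i : 'I_n,
     sder (sigma i) =1 smul (seval (f i) (ptA r0 sigma)) tau
     /\ sigma i 0%N = r0 i)
  /\ sder tau =1 sscale (- (g.@[pt0 r0])^-1)
                        (smul (seval (hpoly f g) (ptC r0 sigma tau)) tau)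
  /\ tau 0%N = (g.@[pt0 r0])^-1.
End Systems.

(* Main.v *)
Require Import Defs.
From HB Require Import structures.
From mathcomp Require Import all_boot all_order all_algebra.
From mathcomp Require Import mpoly.
From mathcomp Require Import boolp.
From mathcomp Require Import zify.
Set Implicit Arguments. Unset Strict Implicit. Unset Printing Implicit Defensive.
Import GRing.Theory.
Local Open Scope ring_scope.

Section SRing.
Variable K : fieldType.
Definition sring : Type := nat -> K.
HB.instance Definition _ := gen_eqMixin sring.
HB.instance Definition _ := gen_choiceMixin sring.

Definition sopp (s : sring) : sring := fun i => - s i.
Local Notation sadd := (@sadd K).
Local Notation smul := (@smul K).

Lemma sext (s t : sring) : s =1 t -> s = t.
Proof. exact: funext. Qed.

Lemma saddA : associative (sadd : sring -> sring -> sring).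
Proof. by move=> s t u; apply: sext => i; rewrite /sadd addrA. Qed.
Lemma saddC : commutative (sadd : sring -> sring -> sring).
Proof. by move=> s t; apply: sext => i; rewrite /sadd addrC. Qed.
Lemma sadd0 : left_id (szero K : sring) sadd.
Proof. by move=> s; apply: sext => i; rewrite /sadd /szero /sconst; case: i => [|i]; rewrite add0r. Qed.
Lemma saddN : left_inverse (szero K : sring) sopp sadd.
Proof. by move=> s; apply: sext => i; rewrite /sadd /szero /sopp /sconst; case: i => [|i]; rewrite addNr. Qed.

HB.instance Definition _ := GRing.isZmodule.Build sring saddA saddC sadd0 saddN.

Definition tp (N : nat) (s : stream K) : {poly K} := \poly_(j < N) s j.

Lemma smulE N s t i : (i < N)%N -> smul s t i = (tp N s * tp N t)`_i.
Proof.
move=> iN; rewrite coefM; apply: eq_bigr => j _.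
rewrite /tp !coef_poly.
have jN : (j < N)%N by apply: leq_ltn_trans iN; rewrite -ltnS.
have ijN : (i - j < N)%N by apply: leq_ltn_trans iN; rewrite leq_subr.
by rewrite jN ijN.
Qed.

Lemma coefM_prefix (p p' q q' : {poly K}) i :
  (forall j, (j <= i)%N -> p`_j = p'`_j) -> (forall j, (j <= i)%N -> q`_j = q'`_j) ->
  (p * q)`_i = (p' * q')`_i.
Proof.
move=> Hp Hq; rewrite !coefM; apply: eq_bigr => j _.
rewrite Hp; last by rewrite -ltnS. by rewrite Hq // leq_subr.
Qed.

Lemma tp_smul N s t j : (j < N)%N -> (tp N (smul s t))`_j = (tp N s * tp N t)`_j.
Proof. move=> jN; rewrite {1}/tp coef_poly jN. exact: (smulE s t jN). Qed.

Lemma smulA : associative (smul : sring -> sring -> sring).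
Proof.
move=> s t u; apply: sext => i.
have iN := ltnSn i.
transitivity ((tp i.+1 s * tp i.+1 t * tp i.+1 u)`_i).
  rewrite -mulrA (smulE s (smul t u) iN); apply: coefM_prefix => // j ji.
  by rewrite tp_smul // ltnS.
rewrite (smulE (smul s t) u iN); apply: coefM_prefix => // j ji.
by rewrite tp_smul // ltnS.
Qed.

Lemma smulC : commutative (smul : sring -> sring -> sring).
Proof. move=> s t; apply: sext => i. by rewrite (smulE s t (ltnSn i)) (smulE t s (ltnSn i)) mulrC. Qed.

Lemma smul1 : left_id (sone K : sring) smul.
Proof.
move=> s; apply: sext => i; rewrite /smul big_ord_recl /= /sone /sconst mul1r subn0 big1 ?addr0 //.
by move=> j _; rewrite mul0r.
Qed.

Lemma smulDl : left_distributive (smul : sring -> sring -> sring) sadd.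
Proof.
move=> s t u; apply: sext => i; rewrite /smul /sadd -big_split /=.
by apply: eq_bigr => j _; rewrite mulrDl.
Qed.

Lemma sone_neq0 : (sone K : sring) != (szero K : sring).
Proof.
apply/eqP => /(congr1 (fun s : sring => s 0%N)); rewrite /sone /szero /sconst /=.
by move/eqP; rewrite oner_eq0.
Qed.

HB.instance Definition _ := GRing.Zmodule_isComNzRing.Build sring smulA smulC smul1 smulDl sone_neq0.

Check (sring : comRingType).
End SRing.

Section Morph.
Variable K : fieldType.
Local Notation sring := (sring K).

Definition sc (c : K) : sring := sconst c.
Definition ev0 (s : sring) : K := s 0%N.

Lemma scM_l c (s : sring) i : (sc c * s) i = c * s i.
Proof.
rewrite /GRing.mul /= /smul big_ord_recl /= subn0 big1 ?addr0 // => j _.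
by rewrite /sc /sconst /= mul0r.
Qed.

Lemma sc_is_additive : additive sc.
Proof.
move=> a b; apply: sext => i; rewrite /sc /sconst /GRing.add /= /sadd /sopp.
by case: i => [|i] //; rewrite subr0.
Qed.
HB.instance Definition _ := GRing.isAdditive.Build K sring sc sc_is_additive.

Lemma sc_is_multiplicative : multiplicative sc.
Proof.
split => [a b|] //; apply: sext => i; rewrite scM_l /sc /sconst.
by case: i => [|i] //; rewrite mulr0.
Qed.
HB.instance Definition _ := GRing.isMultiplicative.Build K sring sc sc_is_multiplicative.

Lemma ev0_is_additive : additive ev0.
Proof. by []. Qed.
HB.instance Definition _ := GRing.isAdditive.Build sring K ev0 ev0_is_additive.
Lemma ev0_is_multiplicative : multiplicative ev0.
Proof.
split => [a b|] //; rewrite /ev0 /GRing.mul /= /smul big_ord1 //.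
Qed.
HB.instance Definition _ := GRing.isMultiplicative.Build sring K ev0 ev0_is_multiplicative.

Lemma sscaleE c (s : stream K) : sscale c s = (sc c * (s : sring)).
Proof. by apply: sext => i; rewrite scM_l. Qed.

Lemma spowE (s : sring) k : spow s k = s ^+ k.
Proof. elim: k => [|k IH] //; rewrite exprS -IH //. Qed.

Lemma sevalE k (p : {mpoly K[k]}) (v : 'I_k -> stream K) :
  seval p v = mmap sc (v : 'I_k -> sring) p.
Proof.
rewrite /seval /mmap; apply: eq_bigr => m _; rewrite sscaleE.
have -> : \big[@smul K/sone K]_(j < k) spow (v j) (m j) = mmap1 (v : 'I_k -> sring) m.
  rewrite /mmap1; apply: eq_bigr => j _; exact: spowE.
by [].
Qed.

Definition D (s : sring) : sring := sder s.
Lemma D_add (s t : sring) : D (s + t) = D s + D t.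
Proof. by []. Qed.

Lemma DM (s t : sring) : D (s * t) = D s * t + sc (s 0%N) * D t.
Proof.
apply: sext => i; rewrite /D /sder /GRing.add /= /sadd scM_l.
rewrite /GRing.mul /= /smul big_ord_recl /= subn0 addrC; congr (_ + _).
Qed.

End Morph.

Section MM.
Variables (k : nat) (R : nzRingType) (S : comNzRingType).

Lemma eq_mmap (f1 f2 : R -> S) (h1 h2 : 'I_k -> S) (p : {mpoly R[k]}) :
  f1 =1 f2 -> h1 =1 h2 -> mmap f1 h1 p = mmap f2 h2 p.
Proof.
move=> ef eh; rewrite /mmap; apply: eq_bigr => m _; rewrite ef; congr (_ * _).
exact: mmap1_eq.
Qed.

Lemma mmapXi (f : {rmorphism R -> S}) (h : 'I_k -> S) i : mmap f h 'X_i = h i.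
Proof. by rewrite mmapX mmap1U. Qed.

End MM.

Lemma mmap_rmorph (k : nat) (R S S' : nzRingType) (phi : {rmorphism S -> S'}) (f : R -> S)
   (h : 'I_k -> S) (p : {mpoly R[k]}) :
  phi (mmap f h p) = mmap (phi \o f) (phi \o h) p.
Proof.
rewrite /mmap rmorph_sum; apply: eq_bigr => m _; rewrite rmorphM /= /mmap1 rmorph_prod.
by congr (_ * _); apply: eq_bigr => j _; rewrite rmorphXn.
Qed.

Lemma mmap_comp (R : nzRingType) (S : comNzRingType) (k l : nat)
   (f : {rmorphism R -> S}) (h : 'I_l -> S) (lq : k.-tuple {mpoly R[l]}) (p : {mpoly R[k]}) :
  mmap f h (p \mPo lq) = mmap f (fun i => mmap f h (tnth lq i)) p.
Proof.
rewrite /comp_mpoly.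
rewrite (mmap_rmorph (mmap f h : {rmorphism {mpoly R[l]} -> S})).
apply: eq_mmap => // c /=; exact: mmapC.
Qed.

Section Sinv.
Variable K : fieldType.
Local Notation sring := (sring K).

Lemma size_sinv_aux (s : stream K) m : size (sinv_aux s m) = m.+1.
Proof. by elim: m => [|m IH] //=; rewrite size_rcons IH. Qed.

Lemma nth_sinv_aux (s : stream K) m j : (j <= m)%N -> nth 0 (sinv_aux s m) j = sinv s j.
Proof.
elim: m j => [|m IH] j.
  by rewrite leqn0 => /eqP ->.
rewrite leq_eqVlt => /orP [/eqP -> //|]; rewrite ltnS => jm.
by rewrite /= nth_rcons size_sinv_aux ltnS jm IH.
Qed.

Lemma sinvS (s : stream K) m :
  sinv s m.+1 = - (s 0%N)^-1 * \sum_(j < m.+1) s j.+1 * sinv s (m - j)%N.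
Proof.
rewrite {1}/sinv /= nth_rcons size_sinv_aux ltnn eqxx; congr (_ * _).
by apply: eq_bigr => j _; rewrite nth_sinv_aux // leq_subr.
Qed.

Lemma sinv0 (s : stream K) : sinv s 0%N = (s 0%N)^-1.
Proof. by []. Qed.

Lemma sinv_mul (s : sring) : s 0%N != 0 -> (sinv s : sring) * s = 1.
Proof.
move=> s0; rewrite mulrC; apply: sext => i; rewrite /GRing.mul /= /smul.
case: i => [|m].
  by rewrite big_ord1 sinv0 mulfV.
rewrite big_ord_recl /= subn0 sinvS mulrA mulrN mulfV // mulN1r.
rewrite /GRing.one /= /sone /sconst /=.
apply/eqP; rewrite addrC subr_eq0; apply/eqP; apply: eq_bigr => j _.
by rewrite /bump /= add1n subSS.
Qed.

Definition Dm : sring -> sring := @D K.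
Lemma D_is_additive : additive Dm.
Proof. by []. Qed.
HB.instance Definition _ := GRing.isAdditive.Build sring sring (@D K) D_is_additive.

Lemma D_sc (c : K) : D (sc c) = 0.
Proof. by apply: sext => -[|i]. Qed.

Lemma D_scM (c : K) (s : sring) : D (sc c * s) = sc c * D s.
Proof. by rewrite DM D_sc mul0r add0r. Qed.

Lemma D_X : D (sX K) = 1.
Proof. by apply: sext => i; rewrite /D /sder /sX; case: i. Qed.

End Sinv.

Section Core.
Variables (K : fieldType) (n : nat).
Local Notation sring := (sring K).
Local Notation sc := (@sc K).
Variables (r0 : 'I_n -> K) (sigma : 'I_n -> sring).
Hypothesis sig0 : forall i, sigma i 0%N = r0 i.

Definition wv (z : option 'I_n) : sring := if z is Some i then sigma i else sX K.

Lemma atI_ord (T : Type) (F : 'I_n -> T) d (i : 'I_n) : atI (val i) F d = F i.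
Proof.
rewrite /atI; case: insubP => [j _ /val_inj -> //|]; by rewrite ltn_ord.
Qed.

Section V.
Variable v : 'I_(n+n+n).+1 -> sring.
Hypotheses (vx : v (vxB n) = sX K) (vy0 : forall i, v (vy0B i) = sc (r0 i))
  (vy : forall i, v (vyB i) = sigma i) (vyp : forall i, v (vypB i) = D (sigma i)).

Lemma mmap_dword w : mmap sc v (dword K w) = D (\prod_(z <- w) wv z).
Proof.
elim: w => [|z w IH] /=.
  by rewrite big_nil mmap0 -[1]/(sc (1 : K)) D_sc.
rewrite big_cons rmorphD /= !rmorphM /= IH DM rmorph_prod /=; congr (_ * _ + _ * _).
- by case: z => [i|] /=; rewrite ?mmapXi ?vyp // rmorph1 D_X.
- by apply: eq_bigr => -[i|] _ /=; rewrite mmapXi.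
- case: z => [i|] /=; first by rewrite mmapXi vy0 sig0.
  by rewrite mmap0 rmorph0.
Qed.

Lemma iter_mulE (R : nzRingType) (a : R) k : iter k ( *%R a) 1 = a ^+ k.
Proof. by elim: k => [|k IH] //=; rewrite IH exprS. Qed.

Lemma prod_word (m : 'X_{1..(n+n).+1}) :
  \prod_(z <- word_of m) wv z = (sX K : sring) ^+ m (vxA n) * \prod_(i < n) sigma i ^+ m (vyA i).
Proof.
rewrite /word_of big_cat big_nseq iter_mulE /=; congr (_ * _).
rewrite big_flatten big_map big_enum /=; apply: eq_bigr => i _.
by rewrite big_nseq iter_mulE.
Qed.

Lemma mmap_y0part (m : 'X_{1..(n+n).+1}) :
  mmap sc v (y0part K m) = \prod_(i < n) sc (r0 i) ^+ m (vy0A i).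
Proof.
rewrite /y0part rmorph_prod; apply: eq_bigr => i _.
by rewrite rmorphXn /= mmapXi vy0.
Qed.

End V.

Lemma ptA_val (j : 'I_(n+n).+1) :
  ptA r0 sigma j = if (nat_of_ord j == 0%N) then sX K else if (nat_of_ord j <= n)%N then sc (atI (nat_of_ord j).-1 r0 0)
     else atI (nat_of_ord j - n).-1 sigma (szero K).
Proof. by []. Qed.

Lemma mmap1_ptA (m : 'X_{1..(n+n).+1}) :
  mmap1 (ptA r0 sigma : 'I_(n+n).+1 -> sring) m =
   (sX K : sring) ^+ m (vxA n) * (\prod_(i < n) sc (r0 i) ^+ m (vy0A i) * \prod_(i < n) sigma i ^+ m (vyA i)).
Proof.
rewrite /mmap1 big_ord_recl big_split_ord /=.
have -> : vxA n = ord0 by apply: val_inj; rewrite /= inordK.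
congr (_ * (_ * _)); apply: eq_bigr => i _.
- have -> : vy0A i = lift ord0 (lshift n i).
    by apply: val_inj; rewrite /= inordK // ltnS ltn_addr.
  rewrite ptA_val lift0 /= ltn_ord.
  by rewrite (atI_ord r0 0 i).
- have -> : vyA i = lift ord0 (rshift n i).
    by apply: val_inj; rewrite /= inordK // ltnS ltn_add2l.
  rewrite ptA_val lift0 /= ltnNge leq_addr /=.
  have -> : (n + i).+1 = (n + i.+1)%N by rewrite addnS.
  by rewrite addKn /= (atI_ord sigma (szero K) i).
Qed.

Lemma core (g : {mpoly K[(n+n).+1]}) (v : 'I_(n+n+n).+1 -> sring) :
  v (vxB n) = sX K -> (forall i, v (vy0B i) = sc (r0 i)) ->
  (forall i, v (vyB i) = sigma i) -> (forall i, v (vypB i) = D (sigma i)) ->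
  mmap sc v (synder g) = D (mmap sc (ptA r0 sigma : 'I_(n+n).+1 -> sring) g).
Proof.
move=> vx vy0 vy vyp.
rewrite /synder raddf_sum /mmap raddf_sum /=; apply: eq_bigr => m _.
rewrite mmapZ rmorphM /= mmap_y0part // mmap_dword // prod_word mmap1_ptA.
have -> : \prod_(i < n) sc (r0 i) ^+ m (vy0A i) = sc (\prod_(i < n) r0 i ^+ m (vy0A i)).
  by rewrite rmorph_prod; apply: eq_bigr => i _; rewrite rmorphXn.
have E (a b c d : sring) : a * (b * (c * d)) = (a * c) * (b * d) by rewrite -!mulrA (mulrCA b).
rewrite (E (sc g@_m)) -rmorphM D_scM mulrA -rmorphM. reflexivity.
Qed.

End Core.

Section Eval.
Variables (K : fieldType) (n : nat).
Local Notation sring := (sring K).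
Local Notation sc := (@sc K).
Variables (r0 : 'I_n -> K) (f : 'I_n -> {mpoly K[(n+n).+1]}) (g : {mpoly K[(n+n).+1]}).

Lemma ptC_val (sigma : 'I_n -> sring) (tau : sring) (j : 'I_(n+n).+2) :
  ptC r0 sigma tau j = if (nat_of_ord j == 0%N) then sX K else if (nat_of_ord j <= n)%N then sc (atI (nat_of_ord j).-1 r0 0)
     else if (nat_of_ord j <= n + n)%N then atI (nat_of_ord j - n).-1 sigma (szero K) else tau.
Proof. by []. Qed.

Lemma ptC_A (sigma : 'I_n -> sring) (tau : sring) (j : 'I_(n+n).+1) :
  ptC r0 sigma tau (widen_ord (leqnSn _) j) = ptA r0 sigma j.
Proof.
rewrite ptC_val ptA_val /=.
have := ltn_ord j; rewrite ltnS => ->; by [].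
Qed.

Lemma mmap_embAC (sigma : 'I_n -> sring) (tau : sring) p :
  mmap sc (ptC r0 sigma tau : 'I_(n+n).+2 -> sring) (embAC p) =
  mmap sc (ptA r0 sigma : 'I_(n+n).+1 -> sring) p.
Proof.
rewrite /embAC mmap_comp; apply: eq_mmap => // j.
by rewrite tnth_mktuple mmapXi ptC_A.
Qed.

Lemma hpoly_eval (sigma : 'I_n -> sring) (tau : sring) :
  (forall i, sigma i 0%N = r0 i) ->
  (forall i, D (sigma i) = (seval (f i) (ptA r0 sigma) : sring) * tau) ->
  (seval (hpoly f g) (ptC r0 sigma tau) : sring) = D (seval g (ptA r0 sigma)).
Proof.
move=> sig0 Hd; rewrite !sevalE /hpoly mmap_comp; apply: core => //.
- rewrite tnth_mktuple /vxB inordK // ltnS leq0n mmapXi ptC_val inordK //.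
- move=> i; rewrite tnth_mktuple /vy0B inordK; last by have := ltn_ord i; lia.
  have -> : (i.+1 < (n+n).+1)%N by have := ltn_ord i; lia.
  rewrite mmapXi ptC_val inordK; last by have := ltn_ord i; lia.
  by rewrite /= ltn_ord (atI_ord r0 0 i).
- move=> i; rewrite tnth_mktuple /vyB inordK; last by have := ltn_ord i; lia.
  have -> : ((n + i).+1 < (n+n).+1)%N by have := ltn_ord i; lia.
  rewrite mmapXi ptC_val inordK; last by have := ltn_ord i; lia.
  have -> : ((n + i).+1 <= n)%N = false by lia.
  have -> : ((n + i).+1 <= n + n)%N by have := ltn_ord i; lia.
  have -> : ((n + i).+1 - n).-1 = i by lia.
  by rewrite /= (atI_ord sigma (szero K) i).
- move=> i; rewrite tnth_mktuple /vypB inordK; last by have := ltn_ord i; lia.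
  have -> : ((n + n + i).+1 < (n+n).+1)%N = false by lia.
  have -> : ((n + n + i).+1 - (n+n).+1)%N = i by lia.
  rewrite (atI_ord (fun i => embAC (f i)) 0 i) rmorphM /= mmap_embAC mmapXi.
  rewrite ptC_val /vwC inordK //.
  have -> : ((n + n).+1 <= n)%N = false by lia.
  have -> : ((n + n).+1 <= n + n)%N = false by lia.
  by rewrite /= Hd sevalE.
Qed.

Lemma seval0 (sigma : 'I_n -> sring) (p : {mpoly K[(n+n).+1]}) :
  (forall i, sigma i 0%N = r0 i) -> seval p (ptA r0 sigma) 0%N = p.@[pt0 r0].
Proof.
move=> sig0; rewrite sevalE; change (ev0 (mmap sc (ptA r0 sigma : 'I_(n+n).+1 -> sring) p) = p.@[pt0 r0]).
rewrite mmap_rmorph /meval; apply: eq_mmap => // j /=.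
rewrite /ev0 ptA_val /pt0 /=; case: ifP => // _; case: ifP => // _.
by rewrite /atI; case: insubP => [i _ _|_] //=.
Qed.

End Eval.

Section Caus.
Variables (K : fieldType).
Local Notation sring := (sring K).
Local Notation sc := (@sc K).

Definition agr k (s t : sring) := forall j, (j <= k)%N -> s j = t j.

Lemma agrM k (s s' t t' : sring) : agr k s s' -> agr k t t' -> agr k (s * t) (s' * t').
Proof.
move=> Hs Ht j jk; rewrite /GRing.mul /= /smul; apply: eq_bigr => l _.
have lj : (l <= j)%N by rewrite -ltnS.
rewrite Hs ?Ht //; [exact: leq_trans (leq_subr _ _) jk | exact: leq_trans lj jk].
Qed.

Lemma agrD k (s s' t t' : sring) : agr k s s' -> agr k t t' -> agr k (s + t) (s' + t').
Proof. by move=> Hs Ht j jk; rewrite /GRing.add /= /sadd Hs ?Ht. Qed.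

Lemma agr_refl k (s : sring) : agr k s s. Proof. by []. Qed.

Lemma agrX k (s s' : sring) e : agr k s s' -> agr k (s ^+ e) (s' ^+ e).
Proof. by move=> H; elim: e => [|e IH]; rewrite ?expr0 ?exprS //; apply: agrM. Qed.

Lemma agr_mmap k m (p : {mpoly K[m]}) (u u' : 'I_m -> sring) :
  (forall j, agr k (u j) (u' j)) -> agr k (mmap sc u p) (mmap sc u' p).
Proof.
move=> H; rewrite /mmap; apply: (big_ind2 (agr k)) => // [x x' y y'|mm _].
  exact: agrD.
apply: agrM => //; rewrite /mmap1; apply: (big_ind2 (agr k)) => // [x x' y y'|j _].
  exact: agrM.
exact: agrX.
Qed.

Lemma agr_sinv k (s s' : sring) : s 0%N != 0 -> agr k s s' -> agr k (sinv s) (sinv s').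
Proof.
move=> s0 H.
have s'0 : s' 0%N != 0 by rewrite -H.
have E1 : (sinv s : sring) = ((sinv s : sring) * sinv s') * s'.
  by rewrite -mulrA (sinv_mul s'0) mulr1.
have E2 : (sinv s' : sring) = ((sinv s : sring) * sinv s') * s.
  by rewrite -mulrA mulrCA (sinv_mul s0) mulr1.
have A := agrM (agr_refl ((sinv s : sring) * sinv s')) H.
rewrite -E1 -E2 in A; by move=> j jk; rewrite A.
Qed.

Lemma D0_one (s : sring) : D s = 0 -> s 0%N = 1 -> s = 1.
Proof.
move=> Ds s0; apply: sext => -[|i] //.
by have := congr1 (fun t : sring => t i) Ds; rewrite /D /sder => ->; case: i.
Qed.

End Caus.

Section Main.
Variables (K : fieldType) (n : nat).
Local Notation sring := (sring K).
Local Notation sc := (@sc K).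
Variables (r0 : 'I_n -> K) (f : 'I_n -> {mpoly K[(n+n).+1]}) (g : {mpoly K[(n+n).+1]}).
Hypothesis Hg : g.@[pt0 r0] != 0.

Lemma agr_ptA k (sigma sigma' : 'I_n -> sring) :
  (forall i, agr k (sigma i) (sigma' i)) -> forall j, agr k (ptA r0 sigma j) (ptA r0 sigma' j).
Proof.
move=> H j l lk; rewrite !ptA_val; case: ifP => // _; case: ifP => // _.
by rewrite /atI; case: insubP => [i _ _|_] //=; apply: H.
Qed.

Lemma rat_unique (sigma sigma' : 'I_n -> stream K) :
  rat_sol f g r0 sigma -> rat_sol f g r0 sigma' -> forall i, sigma i =1 sigma' i.
Proof.
move=> Hs Hs'.
suff H : forall k i, agr k (sigma i) (sigma' i) by move=> i j; exact: (H j i j).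
elim=> [|k IH] i.
  by move=> j; rewrite leqn0 => /eqP ->; rewrite (Hs i).2 (Hs' i).2.
move=> [|j] jk; first by rewrite (Hs i).2 (Hs' i).2.
have e1 := (Hs i).1 j; have e2 := (Hs' i).1 j; rewrite /sder in e1 e2.
rewrite e1 e2; apply: (@agrM K k (seval (f i) (ptA r0 sigma)) _ (sinv (seval g (ptA r0 sigma)))) => //.
- rewrite !sevalE; apply: agr_mmap; exact: agr_ptA.
- apply: agr_sinv.
    rewrite seval0 // => l; exact: (Hs l).2.
  rewrite !sevalE; apply: agr_mmap; exact: agr_ptA.
Qed.

Lemma conv (sigma : 'I_n -> stream K) (tau : stream K) :
  poly_sol f g r0 sigma tau ->
  tau = sinv (seval g (ptA r0 sigma)) /\ rat_sol f g r0 sigma.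
Proof.
move=> [Hs [Ht Ht0]].
have sig0 : forall i, (sigma i : sring) 0%N = r0 i by move=> i; exact: (Hs i).2.
set G : sring := seval g (ptA r0 sigma).
have G0 : G 0%N = g.@[pt0 r0] by rewrite /G seval0.
have HD : forall i, D (sigma i) = (seval (f i) (ptA r0 sigma) : sring) * (tau : sring).
  by move=> i; apply: sext => j; rewrite /D (Hs i).1.
have HH := @hpoly_eval K n r0 f g sigma tau sig0 HD.
have Dt : D tau = sc (- (g.@[pt0 r0])^-1) * (D G * (tau : sring)).
  by apply: sext => j; rewrite /D Ht sscaleE HH.
have Gt : G * (tau : sring) = 1.
  apply: D0_one.
    rewrite DM Dt G0 mulrA -rmorphM mulrN mulfV // rmorphN rmorph1 mulN1r subrr //.
  by rewrite /GRing.mul /= /smul big_ord1 G0 Ht0 mulfV.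
have Et : (tau : sring) = sinv G.
  have G0n : G 0%N != 0 by rewrite G0.
  by rewrite -(mul1r (tau : sring)) -(sinv_mul G0n) -mulrA Gt mulr1.
split; first exact: Et.
move=> i; split; last exact: sig0.
by move=> j; rewrite (Hs i).1 -/G -Et.
Qed.

End Main.

Theorem lemma3p3 (K : fieldType) (charK0 : [pchar K] =i pred0) (n : nat)
  (f : 'I_n -> {mpoly K[(n+n).+1]}) (g : {mpoly K[(n+n).+1]})
  (r0 : 'I_n -> K) (Hg : g.@[pt0 r0] != 0) :
  (forall sigma : 'I_n -> stream K,
     rat_sol f g r0 sigma ->
     let tau := sinv (seval g (ptA r0 sigma)) in
     poly_sol f g r0 sigma tau /\
     (forall (sigma' : 'I_n -> stream K) (tau' : stream K),
        poly_sol f g r0 sigma' tau' ->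
        (forall i : 'I_n, sigma' i =1 sigma i) /\ tau' =1 tau))
  /\
  (forall (sigma : 'I_n -> stream K) (tau : stream K),
     poly_sol f g r0 sigma tau -> rat_sol f g r0 sigma).
Proof.
split; last by move=> sigma tau PS; exact: (conv Hg PS).2.
move=> sigma Hs tau.
have sig0 : forall i, (sigma i : sring K) 0%N = r0 i by move=> i; exact: (Hs i).2.
set c := g.@[pt0 r0].
set G : sring K := seval g (ptA r0 sigma).
have G0 : G 0%N = c by rewrite /G seval0.
have G0n : G 0%N != 0 by rewrite G0.
have HD : forall i, D (sigma i) = (seval (f i) (ptA r0 sigma) : sring K) * (tau : sring K).
  by move=> i; apply: sext => j; rewrite /D (Hs i).1.
have HH := @hpoly_eval K n r0 f g sigma tau sig0 HD.
have Gt : G * (tau : sring K) = 1 by rewrite mulrC sinv_mul.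
have Dt : D tau = sc (- c^-1) * (D G * (tau : sring K)).
  have E : D tau = sc (c^-1) * (sc c * D tau).
    by rewrite mulrA -rmorphM mulVf // rmorph1 mul1r.
  have E2 : sc c * D tau = - (D G * (tau : sring K)).
    apply/eqP; rewrite -addr_eq0 addrC -G0 -DM Gt.
    by rewrite -[1 : sring K]/(sc (1 : K)) D_sc.
  by rewrite E E2 mulrN -mulNr -rmorphN.
have PS : poly_sol f g r0 sigma tau.
  split; first by move=> i; split; [exact: (Hs i).1 | exact: sig0].
  split; last by rewrite /tau sinv0 -/G G0.
  by move=> j; rewrite -[sder tau j]/(D tau j) Dt sscaleE HH.
split => // sigma' tau' PS'.
have [Et' RS'] := conv Hg PS'.
have eqs := rat_unique Hg RS' Hs.
split => //.
have E : sigma' = sigma by apply: funext => i; apply: funext => j; exact: eqs.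
by rewrite Et' E.
Qed.
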